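(* Let $H$ be a subgroup of a finite group $G$, let $\theta$ be a representation of $G$ and $\chi$ a representation of $H$. Let $\mathrm{Irr}(G\mid\chi)$ denote the set of irreducible representations $\rho$ of $G$ with $\langle\mathrm{Res}^G_H\rho,\chi\rangle\neq0$. Suppose every irreducible $\rho$ with $\langle\rho,\theta\rangle\neq0$ lies in $\mathrm{Irr}(G\mid\chi)$. Then there exists $\rho\in\mathrm{Irr}(G\mid\chi)$ with $\langle\rho,\theta\rangle\geq\dim(\theta)/\dim(\mathrm{Ind}_H^G\chi)$. *)

(* Defs.v *)
From HB Require Import structures.
From mathcomp Require Import all_boot all_order all_algebra all_fingroup all_solvable all_field all_character.
Set Implicit Arguments. Unset Strict Implicit. Unset Printing Implicit Defensive.

(* Main.v *)
Require Import Defs.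
From HB Require Import structures.
From mathcomp Require Import all_boot all_order all_algebra all_fingroup all_solvable all_field all_character.
Import Order.TTheory GRing.Theory Num.Theory.
Local Open Scope ring_scope.

Lemma nat_ge1 (x : algC) : x \is a Num.nat -> x != 0 -> 1 <= x.
Proof. by move/natrP=> [n ->]; rewrite pnatr_eq0 ler1n lt0n. Qed.

Theorem lemma9p3 (gT : finGroupType) (G H : {group gT}) (theta : 'CF(G)) (chi : 'CF(H))
  (sHG : H \subset G)
  (theta_char : theta \is a character) (theta_nz : theta != 0)
  (chi_char : chi \is a character) (chi_nz : chi != 0)
  (hyp : forall i : Iirr G, '['chi_i, theta] != 0 -> '['Res[H] 'chi_i, chi] != 0) :
  exists i : Iirr G, '['Res[H] 'chi_i, chi] != 0 /\
    '['chi_i, theta] >= theta 1%g / ('Ind[G] chi) 1%g.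
Proof.
set c := theta 1%g / ('Ind[G] chi) 1%g.
have IndC : 'Ind[G] chi \is a character := cfInd_char G chi_char.
have Ind_gt0 : 0 < ('Ind[G] chi) 1%g by rewrite char1_gt0 // cfInd_eq0.
have c_ge0 : 0 <= c by rewrite divr_ge0 // char1_ge0.
have expand : forall phi : 'CF(G), phi 1%g = \sum_i '[phi, 'chi_i] * 'chi_i 1%g.
  move=> phi; rewrite {1}(cfun_sum_cfdot phi) sum_cfunE.
  by apply: eq_bigr => i _; rewrite cfunE.
have aE : forall i : Iirr G, '[theta, 'chi_i] = '['chi_i, theta].
  by move=> i; rewrite cfdotC_char // irr_char.
have bE : forall i : Iirr G, '['Ind[G] chi, 'chi_i] = '['Res[H] 'chi_i, chi].
  by move=> i; rewrite cfdotC_char ?irr_char // cfdot_Res_l.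
have [i0 hi0] : exists i0 : Iirr G, '['chi_i0, theta] != 0.
  apply/existsP; apply: contraR theta_nz => /existsPn Hn.
  rewrite (cfun_sum_cfdot theta) big1 // => i _.
  by have := Hn i; rewrite negbK aE => /eqP ->; rewrite scale0r.
have areal : forall i : Iirr G, '['chi_i, theta] \is Num.real.
  by move=> i; apply: Rreal_nat; rewrite -aE Cnat_cfdot_char_irr.
have c_real : c \is Num.real by apply: ger0_real.
case: (boolP [exists i : Iirr G, ('['Res[H] 'chi_i, chi] != 0) && (c <= '['chi_i, theta])]).
  by move=> /existsP [i /andP [h1 h2]]; exists i.
move=> /existsPn Hn; exfalso.
have term : forall i : Iirr G, '['chi_i, theta] != 0 ->
    '['chi_i, theta] * 'chi_i 1%g < c * ('['Res[H] 'chi_i, chi] * 'chi_i 1%g).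
  move=> i hi; have hb := hyp i hi.
  have lt : '['chi_i, theta] < c.
    by rewrite real_ltNge //; have := Hn i; rewrite hb.
  have b1 : 1 <= '['Res[H] 'chi_i, chi].
    by apply: nat_ge1 => //; rewrite -bE Cnat_cfdot_char_irr.
  apply: (lt_le_trans (y := c * 'chi_i 1%g)).
    by rewrite ltr_pM2r ?irr1_gt0.
  rewrite mulrA ler_wpM2r //; first exact: ltW (irr1_gt0 i).
  by rewrite -{1}(mulr1 c); apply: ler_wpM2l.
have : theta 1%g < c * ('Ind[G] chi) 1%g.
  rewrite (expand theta) (expand ('Ind[G] chi)) mulr_sumr.
  rewrite (bigD1 i0) //= [X in _ < X](bigD1 i0) //=.
  apply: ltr_leD; first by rewrite aE bE; apply: term.
  apply: ler_sum => i _; rewrite aE bE.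
  have [a0|anz] := eqVneq '['chi_i, theta] 0.
    rewrite a0 mul0r; apply: (mulr_ge0 c_ge0); apply: mulr_ge0; last exact: ltW (irr1_gt0 i).
    by rewrite -bE; apply: natr_ge0; apply: Cnat_cfdot_char_irr.
  exact: ltW (term i anz).
by rewrite /c divfK ?lt0r_neq0 // ltxx.
Qed.
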